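(* Let $K\ge 4$ be even and let $\bar t:=K-t$ be even with $2\le \bar t\le K/2$, where $t=KM/N$. Then the D2D coded caching rate $R=N/M-1$ is achievable with some subpacketization $F$ satisfying $F\le F_{\rm JCM}$ and $$\frac{F}{F_{\rm JCM}}\le \min\Big\{\frac{1}{t}\prod_{i=1}^{\bar t/2}(2i-1),\;1\Big\}.$$
   Context: D2D coded caching setting: there are $N\ge 1$ files $W_1,\dots,W_N$ and $K\ge 2$ users, each with a cache of size $M$ files, $0<M\le N$, and $t:=KM/N$ is assumed to be a positive integer. A D2D coded caching scheme with (uncoded placement and) subpacketization $F\in\mathbb{N}_+$ is defined as follows. Fix a packet size $b\ge 1$; each file is a sequence of $F$ packets $W_n=(W_n^{(1)},\dots,W_n^{(F)})$, $W_n^{(j)}\in\{0,1\}^b$. Placement: each user $k\in[K]$ stores the packets $\{W_n^{(j)}:(n,j)\in Z_k\}$ for a fixed index set $Z_k\subseteq[N]\times[F]$ with $|Z_k|\le MF$ (independent of demands and file contents). Delivery: for every demand vector $\mathbf d=(d_1,\dots,d_K)\in[N]^K$, each user $k$ broadcasts to all other users $\ell_k(\mathbf d)\in\mathbb{N}$ blocks in $\{0,1\}^b$, each a deterministic function of the packets stored by user $k$; it is required that for all file contents each user $k$ can recover all $F$ packets of $W_{d_k}$ from its stored packets and the blocks sent by the other users. The rate is $R=\max_{\mathbf d}\frac{1}{F}\sum_{k=1}^K\ell_k(\mathbf d)$ (transmitted bits normalized by the file size $Fb$). The rate $R$ is achievable with subpacketization $F$ if such a scheme with rate $R$ exists for every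 packet size $b\ge 1$. Define $F_{\rm JCM}:=t\binom{K}{t}$. *)

(* Defs.v *)
From mathcomp Require Import all_boot all_order all_algebra.
Set Implicit Arguments. Unset Strict Implicit. Unset Printing Implicit Defensive.
Import Order.TTheory GRing.Theory Num.Theory.

Definition block (b : nat) := (b.-tuple bool)%type.

(* File contents: W n j = j-th packet of file n. *)
Definition library (N F b : nat) := 'I_N -> 'I_F -> block b.

(* What a user with index set Z has stored: the packet at (n,j) if (n,j) \in Z,
   nothing otherwise. Encoders/decoders only see this, so they are deterministic
   functions of the stored packets. *)
Definition cache_of (N F b : nat) (Z : {set 'I_N * 'I_F}) (W : library N F b)
  : 'I_N * 'I_F -> option (block b) :=
  fun p => if p \in Z then Some (W p.1 p.2) else None.

Definition demand (N K : nat) := {ffun 'I_K -> 'I_N}.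

Record D2D_scheme (N K F b : nat) := {
  Zset : 'I_K -> {set 'I_N * 'I_F};
  ell : demand N K -> 'I_K -> nat;
  enc : demand N K -> 'I_K -> ('I_N * 'I_F -> option (block b)) -> seq (block b);
  dec : demand N K -> 'I_K -> ('I_N * 'I_F -> option (block b)) ->
        ('I_K -> seq (block b)) -> 'I_F -> block b
}.

(* Validity: cache constraint |Z_k| <= M F; user k broadcasts exactly ell d k
   blocks; user k decodes W_{d_k} from its cache and the broadcasts of the
   other users (its own slot is replaced by the empty sequence). *)
Definition valid_scheme (N K : nat) (M : rat) (F b : nat)
  (S : D2D_scheme N K F b) : Prop :=
  [/\ forall k : 'I_K, (#|Zset S k|%:R <= M * F%:R :> rat)%R,
      forall (d : demand N K) (k : 'I_K) (W : library N F b),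
        size (enc S d k (cache_of (Zset S k) W)) = ell S d k
    & forall (d : demand N K) (k : 'I_K) (W : library N F b) (j : 'I_F),
        dec S d k (cache_of (Zset S k) W)
          (fun k' => if k' == k then [::] else enc S d k' (cache_of (Zset S k') W)) j
        = W (d k) j ].

Definition scheme_rate (N K F b : nat) (S : D2D_scheme N K F b) : rat :=
  ((\max_(d : demand N K) \sum_(k < K) ell S d k)%:R / F%:R)%R.

Definition achievable (N K : nat) (M : rat) (F : nat) (R : rat) : Prop :=
  0 < F /\
  forall b : nat, 0 < b ->
    exists S : D2D_scheme N K F b, valid_scheme M S /\ scheme_rate S = R.

Definition F_JCM (K t : nat) : nat := t * 'C(K, t).

(* Main.v *)
Require Import Defs.
From HB Require Import structures.
From mathcomp Require Import all_boot all_order all_algebra.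
From mathcomp Require Import zify ring.
Import Order.TTheory GRing.Theory Num.Theory.
Set Implicit Arguments. Unset Strict Implicit. Unset Printing Implicit Defensive.

Definition bxor b (x y : block b) : block b := [tuple (tnth x i (+) tnth y i) | i < b].
Definition bzero b : block b := [tuple false | i < b].
Lemma bxorA b : associative (@bxor b).
Proof. by move=> x y z; apply: eq_from_tnth => i; rewrite !tnth_mktuple addbA. Qed.
Lemma bxorC b : commutative (@bxor b).
Proof. by move=> x y; apply: eq_from_tnth => i; rewrite !tnth_mktuple addbC. Qed.
Lemma bxor0 b : left_id (bzero b) (@bxor b).
Proof. by move=> x; apply: eq_from_tnth => i; rewrite !tnth_mktuple. Qed.
HB.instance Definition _ b := Monoid.isComLaw.Build (block b) (bzero b) (@bxor b) (@bxorA b) (@bxorC b) (@bxor0 b).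
Lemma bxorK b (x y : block b) : bxor (bxor x y) y = x.
Proof. by apply: eq_from_tnth => i; rewrite !tnth_mktuple -addbA addbb addbF. Qed.

Section Frame.
Variables (N K tb W E b : nat).
Variable w : {set 'I_K} -> nat.
Variable Serv : {set 'I_K} -> {set 'I_K}.
Variable e : {set 'I_K} -> nat.
Hypothesis hw : forall S, w S <= W.+1.
Hypothesis he : forall C, e C <= E.
Hypothesis hServ : forall C : {set 'I_K}, #|C| = tb.-1 -> Serv C \subset ~: C.
Hypothesis hcnt : forall (C : {set 'I_K}) k, #|C| = tb.-1 -> k \notin C -> #|Serv C :\ k| * e C = w (k |: C).

Local Notation T := ({set 'I_K} * 'I_W.+1)%type.
Local Notation T2 := ({set 'I_K} * 'I_E)%type.
Definition pkP (x : T) := (#|x.1| == tb) && (x.2 < w x.1).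
Definition pl := [seq x : T <- index_enum T | pkP x].
Definition Fp := size pl.
Definition x0 : T := (set0, ord0).
Definition pv (j : 'I_Fp) : T := nth x0 pl j.
Definition pkt (S : {set 'I_K}) (l : nat) : option 'I_Fp :=
  if pkP (S, inord l) && (l <= W) then insub (index (S, inord l) pl) else None.
Definition Zs (k : 'I_K) : {set 'I_N * 'I_Fp} := [set p | k \notin (pv p.2).1].
Definition fetch (c : 'I_N * 'I_Fp -> option (block b)) (n : 'I_N) (oj : option 'I_Fp) : block b :=
  if oj is Some j then odflt (bzero b) (c (n, j)) else bzero b.
Definition Lab (C : {set 'I_K}) (k s : 'I_K) (r : nat) := index s (enum (Serv C :\ k)) * e C + r.
Definition tx (d : demand N K) (s : 'I_K) c (C : {set 'I_K}) (r : nat) : block b :=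
  \big[@bxor b/bzero b]_(k | (k \notin C) && (k != s)) fetch c (d k) (pkt (k |: C) (Lab C k s r)).
Definition sl (s : 'I_K) := [seq x : T2 <- index_enum T2 | (#|x.1| == tb.-1) && (s \in Serv x.1) && (x.2 < e x.1)].
Definition encf d s c := [seq tx d s c x.1 x.2 | x : T2 <- sl s].
Definition decf d k c (bc : 'I_K -> seq (block b)) (j : 'I_Fp) : block b :=
  let S := (pv j).1 in let l := nat_of_ord (pv j).2 in
  if k \notin S then fetch c (d k) (Some j) else
  let C := S :\ k in
  let s := nth k (enum (Serv C :\ k)) (l %/ e C) in
  let r := l %% e C in
  let i := find (fun x : T2 => (x.1 == C) && (nat_of_ord x.2 == r)) (sl s) in
  bxor (nth (bzero b) (bc s) i)
   (\big[@bxor b/bzero b]_(k' | (k' \notin C) && (k' != s) && (k' != k))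
       fetch c (d k') (pkt (k' |: C) (Lab C k' s r))).
Definition scheme : D2D_scheme N K Fp b :=
  {| Zset := Zs; ell := fun _ s => size (sl s); enc := encf; dec := decf |}.

Lemma pv_in (j : 'I_Fp) : pkP (pv j).
Proof. by have := mem_nth x0 (ltn_ord j); rewrite mem_filter => /andP[]. Qed.

Lemma pkt_pv (j : 'I_Fp) : pkt (pv j).1 (pv j).2 = Some j.
Proof.
rewrite /pkt inord_val -surjective_pairing pv_in -ltnS ltn_ord /=.
rewrite index_uniq ?filter_uniq ?index_enum_uniq //.
exact: valK.
Qed.

Lemma pkt_some S l j : pkt S l = Some j -> (pv j).1 = S.
Proof.
rewrite /pkt; case: ifP => // /andP[hP _].
case: insubP => // j' hlt hv [<-].
rewrite /pv hv nth_index //.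
by rewrite mem_filter hP mem_index_enum.
Qed.

Definition fw (Wl : library N Fp b) n (oj : option 'I_Fp) :=
  if oj is Some j then Wl n j else bzero b.

Lemma fetch_cache u Wl n oj : (forall j, oj = Some j -> u \notin (pv j).1) ->
  fetch (cache_of (Zs u) Wl) n oj = fw Wl n oj.
Proof.
case: oj => [j|] //= /(_ j erefl) h.
by rewrite /cache_of inE h.
Qed.


Lemma decode_ok (d : demand N K) k Wl (j : 'I_Fp) :
  decf d k (cache_of (Zs k) Wl)
    (fun k' => if k' == k then [::] else encf d k' (cache_of (Zs k') Wl)) j = Wl (d k) j.
Proof.
rewrite /decf.
set S := (pv j).1; set l := nat_of_ord (pv j).2.
case: ifP => [hk|/negbFE hk].
  by rewrite fetch_cache // => j' [<-].
set C := S :\ k; set sv := enum (Serv C :\ k).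
set s := nth k sv (l %/ e C); set r := l %% e C.
have hP := pv_in j; case/andP: hP => /eqP hS hl.
have hkC : k \notin C by rewrite setD11.
have hSC : k |: C = S by rewrite setD1K.
have hC : #|C| = tb.-1 by rewrite -hS (cardsD1 k S) hk.
have hl' : l < #|Serv C :\ k| * e C by rewrite hcnt // hSC.
have epos : 0 < e C by move: hl'; case: (e C) => //; rewrite muln0.
have hi : l %/ e C < size sv by rewrite -cardE ltn_divLR.
have hsin : s \in Serv C :\ k by rewrite -mem_enum mem_nth.
have hsk : s != k by move: hsin; rewrite in_setD1 => /andP[].
have hsS : s \in Serv C by move: hsin; rewrite in_setD1 => /andP[].
have hsC : s \notin C by have := subsetP (hServ hC) s hsS; rewrite inE.
have hLab : Lab C k s r = l.
  rewrite /Lab index_uniq ?enum_uniq // -divn_eq //.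
have hpkt : pkt (k |: C) (Lab C k s r) = Some j.
  by rewrite hLab hSC /l /S pkt_pv.
have hr : r < E by apply: leq_trans (he C); rewrite /r ltn_pmod.
pose x := (C, Ordinal hr) : T2.
have hx : x \in sl s by rewrite mem_filter /= hC eqxx hsS ltn_pmod // mem_index_enum.
set pr := (fun x : T2 => _).
have hhas : has pr (sl s) by apply/hasP; exists x => //; rewrite /pr /= !eqxx.
have hfi : find pr (sl s) < size (sl s) by rewrite -has_find.
have := nth_find x hhas; rewrite {1}/pr => /andP[/eqP hy1 /eqP hy2].
rewrite (negbTE hsk) /encf (nth_map x) //.
set y := nth x (sl s) _ in hy1 hy2 *.
rewrite /tx hy1 hy2 (bigD1 k) /=; last by rewrite hkC eq_sym hsk.
rewrite hpkt fetch_cache; last first.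
  move=> j' [<-]; rewrite -/S -hSC in_setU1 negb_or hsC andbT; exact: hsk.
rewrite /=.
set B1 := \big[_/_]_(i | _) fetch (cache_of (Zs s) Wl) _ _.
set B2 := \big[_/_]_(i | _) fetch (cache_of (Zs k) Wl) _ _.
have -> : B1 = B2.
  apply: eq_bigr => k' /andP[/andP[hk'C hk's] hk'k].
  by rewrite !fetch_cache // => j'' /pkt_some ->;
    rewrite in_setU1 negb_or ?hkC ?hsC andbT eq_sym.
by rewrite bxorK.
Qed.


Lemma sum_ord_lt n m a : m <= n -> \sum_(l < n | l < m) a = m * a.
Proof.
move=> h; rewrite (big_ord_narrow h) sum_nat_const card_ord //.
Qed.

Lemma sum_pl (Q : pred {set 'I_K}) :
  #|[set j : 'I_Fp | Q (pv j).1]| = \sum_(S : {set 'I_K} | (#|S| == tb) && Q S) w S.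
Proof.
rewrite -sum1_card (eq_bigl (fun j : 'I_Fp => Q (nth x0 pl j).1)); last first.
  by move=> j; rewrite inE.
rewrite -(big_mkord (fun j => Q (nth x0 pl j).1) (fun j => 1)) -(@big_nth _ _ _ _ x0 pl (fun x : T => Q x.1) (fun _ => 1)).
rewrite big_filter_cond.
rewrite (eq_bigl (fun x : T => ((#|x.1| == tb) && Q x.1) && (x.2 < w x.1))); last first.
  by move=> x; rewrite /pkP; case: (#|x.1| == tb); case: (Q x.1); case: (_ < _).
rewrite -(pair_big_dep (fun S : {set 'I_K} => (#|S| == tb) && Q S) (fun (S : {set 'I_K}) (l : 'I_W.+1) => l < w S) (fun _ _ => 1)).
apply: eq_bigr => S _; by rewrite sum_ord_lt // muln1.
Qed.

Lemma Fp_sum : Fp = \sum_(S : {set 'I_K} | #|S| == tb) w S.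
Proof.
have := sum_pl xpredT; rewrite (eq_bigl (fun S : {set 'I_K} => #|S| == tb)); last first.
  by move=> S; rewrite andbT.
move=> <-; rewrite (eq_finset (fun _ => true)) // cardsT card_ord //.
Qed.

Lemma card_Zs u : #|Zs u| = N * \sum_(S : {set 'I_K} | (#|S| == tb) && (u \notin S)) w S.
Proof.
rewrite -(sum_pl (fun S => u \notin S)).
have -> : Zs u = setX [set: 'I_N] [set j : 'I_Fp | u \notin (pv j).1].
  by apply/setP => -[n j]; rewrite !inE.
by rewrite cardsX cardsT card_ord.
Qed.

Lemma ell_sum : \sum_s size (sl s) = \sum_(C : {set 'I_K} | #|C| == tb.-1) #|Serv C| * e C.
Proof.
rewrite (eq_bigr (fun s => \sum_(x : T2) (if (#|x.1| == tb.-1) && (s \in Serv x.1) && (x.2 < e x.1) then 1 else 0))); last first.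
  by move=> s _; rewrite size_filter -sum1_count big_mkcond.
rewrite exchange_big /=.
rewrite (eq_bigr (fun x : T2 => if (#|x.1| == tb.-1) && (x.2 < e x.1) then #|Serv x.1| else 0)); last first.
  move=> x _; case h: (#|x.1| == tb.-1); case h2: (x.2 < e x.1) => /=.
  - by rewrite -big_mkcond -sum1_card; apply: eq_bigl => s; rewrite ?andbT.
  - by rewrite big1 // => s; rewrite andbF.
  - by rewrite big1.
  - by rewrite big1.
rewrite -(pair_bigA _ (fun (C : {set 'I_K}) (l : 'I_E) => if (#|C| == tb.-1) && (l < e C) then #|Serv C| else 0)) /=.
rewrite [RHS]big_mkcond /=; apply: eq_bigr => C _.
case: (#|C| == tb.-1) => /=; last by rewrite big1.
by rewrite -big_mkcond sum_ord_lt // mulnC.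
Qed.


Definition tog (p : {set 'I_K} * 'I_K) : {set 'I_K} * 'I_K :=
  (if p.2 \in p.1 then p.1 :\ p.2 else p.2 |: p.1, p.2).

Lemma togK : involutive tog.
Proof.
move=> [S k]; rewrite /tog /=; case h: (k \in S); rewrite /= ?setD11 ?setU11 /=.
  by rewrite setD1K.
by rewrite setU1K ?h.
Qed.

Lemma trans_count (htb : 0 < tb) (htK : tb <= K) :
  (K - tb) * \sum_(C : {set 'I_K} | #|C| == tb.-1) #|Serv C| * e C = tb * Fp.
Proof.
rewrite big_distrr /=.
rewrite (eq_bigr (fun C : {set 'I_K} => \sum_(k | k \notin C) w (k |: C))); last first.
  move=> C /eqP hC.
  rewrite -(eq_bigr _ (fun k (hk : k \notin C) => hcnt hC hk)) -big_distrl /= mulnA.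
  congr (_ * _).
  have h1 : \sum_(k | k \notin C) (#|Serv C :\ k| + (k \in Serv C)) = #|~: C| * #|Serv C|.
    rewrite -sum_nat_const; apply: eq_big => [k|k _]; first by rewrite inE.
    by rewrite addnC -cardsD1.
  have h2 : \sum_(k | k \notin C) ((k \in Serv C) : nat) = #|Serv C|.
    rewrite -sum1_card big_mkcond [RHS]big_mkcond; apply: eq_bigr => k _.
    case hk: (k \in Serv C); last by case: (k \notin C).
    by have := subsetP (hServ hC) k hk; rewrite inE => ->.
  have h3 : #|~: C| = (K - tb).+1.
    have := cardsC C; rewrite card_ord hC; lia.
  move: h1; rewrite big_split /= h2 h3 mulSn addnC => /eqP; rewrite eqn_add2l => /eqP -> //.
rewrite big_mkcond /=.
rewrite (eq_bigr (fun C : {set 'I_K} => \sum_(k : 'I_K) (if (#|C| == tb.-1) && (k \notin C) then w (k |: C) else 0))); last first.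
  move=> C _; case: (#|C| == tb.-1); first by rewrite big_mkcond.
  by rewrite big1.
rewrite pair_bigA /=.
pose G (p : {set 'I_K} * 'I_K) := if (#|p.1| == tb) && (p.2 \in p.1) then w p.1 else 0.
rewrite (eq_bigr (fun p => G (tog p))); last first.
  move=> [C k] _; rewrite /G /tog /=; case hk: (k \in C); rewrite /= ?setD11 ?setU11 ?andbF ?andbT //.
  rewrite cardsU1 hk /=.
  by have -> : (#|C| == tb.-1) = (1 + #|C| == tb) by apply/idP/idP => /eqP h; apply/eqP; lia.
rewrite -(reindex_inj (inv_inj togK) (F := G) (P := xpredT)) /G.
rewrite -(pair_bigA _ (fun (S : {set 'I_K}) (k : 'I_K) => if (#|S| == tb) && (k \in S) then w S else 0)) /=.
rewrite Fp_sum big_distrr /= [RHS]big_mkcond; apply: eq_bigr => S _.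
case hS: (#|S| == tb) => /=; last by rewrite big1.
rewrite -big_mkcond sum_nat_const (eqP hS); congr (_ * _); apply: eq_card => k; rewrite inE.
Qed.

Definition Gs (u : 'I_K) := \sum_(S : {set 'I_K} | (#|S| == tb) && (u \notin S)) w S.

Lemma cache_count (htK : tb <= K) (hsym : forall u v, Gs u = Gs v) u :
  K * Gs u = (K - tb) * Fp.
Proof.
have -> : K * Gs u = \sum_(v : 'I_K) Gs v.
  by rewrite (eq_bigr (fun _ => Gs u)) ?sum_nat_const ?card_ord // => v _; rewrite hsym.
rewrite /Gs (eq_bigr (fun v => \sum_(S : {set 'I_K}) (if (#|S| == tb) && (v \notin S) then w S else 0))); last first.
  by move=> v _; rewrite big_mkcond.
rewrite exchange_big /= Fp_sum big_distrr /= [RHS]big_mkcond; apply: eq_bigr => S _.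
case hS: (#|S| == tb) => /=; last by rewrite big1.
rewrite -big_mkcond sum_nat_const; congr (_ * _).
have := cardsC S; rewrite card_ord (eqP hS) => h.
have -> : #|[pred v | v \notin S]| = #|~: S| by apply: eq_card => v; rewrite !inE.
lia.
Qed.

End Frame.


Section RS0.
Local Open Scope ring_scope.

Lemma frame_ach N K tb W E (w : {set 'I_K} -> nat) (Serv : {set 'I_K} -> {set 'I_K})
    (e : {set 'I_K} -> nat) (M : rat) :
  (forall S, (w S <= W.+1)%N) -> (forall C, (e C <= E)%N) ->
  (forall C : {set 'I_K}, #|C| = tb.-1 -> Serv C \subset ~: C) ->
  (forall (C : {set 'I_K}) k, #|C| = tb.-1 -> k \notin C -> (#|Serv C :\ k| * e C)%N = w (k |: C)) ->
  (0 < tb)%N -> (tb < K)%N -> (0 < N)%N ->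
  (forall u v, Gs tb w u = Gs tb w v) -> (0 < Fp tb W w)%N ->
  M = (K - tb)%:R * N%:R / K%:R ->
  achievable N K M (Fp tb W w) (N%:R / M - 1).
Proof.
move=> hw he hServ hcnt htb htK hN hsym hF hM.
split => // b _.
exists (scheme N tb W E b w Serv e).
have hK : (0 < K)%N by apply: leq_trans htK.
have Kt : K = ((K - tb) + tb)%N by rewrite subnK // ltnW.
have tpos : (0 < K - tb)%N by rewrite subn_gt0.
split; first split.
- move=> k /=.
  have h1 : #|Zs N tb W w k| = (N * Gs tb w k)%N by apply: card_Zs.
  have h2 : (K * Gs tb w k = (K - tb) * Fp tb W w)%N.
    by apply: cache_count => //; exact: ltnW.
  have : (#|Zs N tb W w k| * K = N * ((K - tb) * Fp tb W w))%N.
    by rewrite h1 -h2 mulnCA mulnC.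
  move=> /(congr1 (fun n : nat => n%:R : rat)); rewrite !natrM => h3.
  rewrite le_eqVlt; apply/orP; left; apply/eqP.
  apply: (@mulIf _ K%:R); first by rewrite pnatr_eq0 -lt0n.
  rewrite h3 hM; field; by rewrite pnatr_eq0 -lt0n.
- by move=> d k Wl; rewrite /= size_map.
- by move=> d k Wl j; apply: decode_ok.
rewrite /scheme_rate /=.
pose d0 : demand N K := [ffun _ => Ordinal hN].
rewrite (bigop.bigmax_eq_arg d0) //=.
have -> : (\sum_(k < K) size (sl tb E Serv e k))%N = (\sum_(C : {set 'I_K} | #|C| == tb.-1) #|Serv C| * e C)%N.
  by apply: ell_sum.
set X := (\sum_(C | _) _)%N.
have h : ((K - tb) * X = tb * Fp tb W w)%N by apply: trans_count => //; exact: ltnW.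
have hX : X%:R = tb%:R * (Fp tb W w)%:R / (K - tb)%:R :> rat.
  apply: (@mulIf _ (K - tb)%:R); first by rewrite pnatr_eq0 -lt0n.
  rewrite mulfVK ?pnatr_eq0 -?lt0n // -!natrM mulnC h //.
have hKr : K%:R = (K - tb)%:R + tb%:R :> rat by rewrite -natrD subnK // ltnW.
have h1 : (K - tb)%:R != 0 :> rat by rewrite pnatr_eq0 -lt0n.
have h2 : (Fp tb W w)%:R != 0 :> rat by rewrite pnatr_eq0 -lt0n.
have h3 : (N%:R != 0 :> rat) by rewrite pnatr_eq0 -lt0n.
have h4 : (K%:R != 0 :> rat) by rewrite pnatr_eq0 -lt0n.
rewrite hX hM; move: h4; rewrite hKr => h4.
by field; rewrite h1 h2 h3 h4.
Qed.


End RS0.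

Section Rot.
Variable K : nat.

Definition rot (a : nat) (x : 'I_K) : 'I_K :=
  Ordinal (ltn_pmod (x + a) (leq_ltn_trans (leq0n x) (ltn_ord x))).

Lemma rot_val a x : val (rot a x) = (x + a) %% K.
Proof. by []. Qed.

Lemma rot_inj a : injective (rot a).
Proof.
move=> x y /(congr1 val); rewrite !rot_val => /eqP.
rewrite eqn_modDr !modn_small // => /eqP h; exact: val_inj.
Qed.

Lemma rotC a c x : rot a (rot c x) = rot c (rot a x).
Proof.
apply: val_inj; rewrite !rot_val !modnDml -!addnA (addnC a c) //.
Qed.

Lemma rot_to (u v : 'I_K) : rot (v + (K - u)) u = v.
Proof.
apply: val_inj; rewrite rot_val addnCA addnBA; last exact: ltnW.
by rewrite (addnC u) addnK -modnDmr modnn addn0 modn_small.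
Qed.

Lemma Gs_sym (tb : nat) (w : {set 'I_K} -> nat) :
  (forall a (S : {set 'I_K}), w (rot a @: S) = w S) -> forall u v, Gs tb w u = Gs tb w v.
Proof.
move=> hinv u v; rewrite -(rot_to u v) /Gs.
set a := v + (K - u).
rewrite [RHS](reindex_inj (imset_inj (@rot_inj a))) /=.
apply: eq_big => [S|S _]; last by rewrite hinv.
by rewrite (card_imset _ (@rot_inj a)) (mem_imset _ _ (@rot_inj a)).
Qed.

End Rot.

Lemma card_lt_set K m : m <= K -> #|[set x : 'I_K | x < m]| = m.
Proof.
move=> h; rewrite -sum1_card (eq_bigl (fun x : 'I_K => x < m)) ?sum_ord_lt ?muln1 //.
by move=> x; rewrite inE.
Qed.

Lemma sum_w_pos K tb (w : {set 'I_K} -> nat) (S0 : {set 'I_K}) :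
  #|S0| = tb -> 0 < w S0 -> 0 < \sum_(S : {set 'I_K} | #|S| == tb) w S.
Proof.
move=> h1 h2; rewrite (bigD1 S0) ?h1 //=; exact: leq_trans h2 (leq_addr _ _).
Qed.

Section RS1.
Local Open Scope ring_scope.

Lemma jcm_ach N K tb (M : rat) : (0 < tb)%N -> (tb < K)%N -> (0 < N)%N ->
  M = (K - tb)%:R * N%:R / K%:R ->
  achievable N K M ((K - tb) * 'C(K, tb)) (N%:R / M - 1).
Proof.
move=> htb htK hN hM.
pose w := fun S : {set 'I_K} => if #|S| == tb then (K - tb)%N else 0%N.
have hw : forall S, (w S <= (K - tb).+1)%N.
  by move=> S; rewrite /w; case: ifP.
have hF : Fp tb (K - tb) w = ((K - tb) * 'C(K, tb))%N.
  rewrite (Fp_sum tb hw) (eq_bigr (fun _ => (K - tb)%N)); last by move=> S hS; rewrite /w hS.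
  rewrite sum_nat_const mulnC; congr (_ * _).
  have := card_draws 'I_K tb; rewrite card_ord => <-; apply: eq_card => S; by rewrite inE.
rewrite -hF; apply: (@frame_ach N K tb (K - tb) 1 w (fun C => ~: C) (fun _ => 1%N) M) => //.
- move=> C k hC hk; rewrite muln1 /w cardsU1 hk /=.
  have -> : (1 + #|C| == tb) by apply/eqP; rewrite hC; lia.
  have := cardsC C; rewrite card_ord hC (cardsD1 k (~: C)) inE hk /= => h; lia.
- apply: Gs_sym => a S; rewrite /w card_imset //; exact: rot_inj.
- rewrite hF muln_gt0 subn_gt0 htK bin_gt0; exact: ltnW.
Qed.


End RS1.

Definition fprod h i := (\prod_(1 <= m < i.+1) (2 * m - 1)) * \prod_(i <= m < h) (2 * m).
Definition Ee h i := (\prod_(1 <= m < i) (2 * m - 1)) * \prod_(i <= m < h) (2 * m).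

Lemma fprod_Ee1 h i : 0 < i -> fprod h i = (2 * i - 1) * Ee h i.
Proof.
move=> hi; rewrite /fprod /Ee big_nat_recr //=.
by rewrite [_ * (2 * i - 1)]mulnC -mulnA.
Qed.

Lemma fprod_Ee2 h i : i < h -> fprod h i = (2 * i) * Ee h i.+1.
Proof.
move=> hi; rewrite /fprod /Ee (big_ltn hi) /=.
by rewrite mulnCA.
Qed.

Lemma fprod_mono h i : i < h -> fprod h i <= fprod h i.+1.
Proof.
move=> hi; rewrite (fprod_Ee2 hi) fprod_Ee1 // leq_mul2r; apply/orP; right.
lia.
Qed.

Lemma fprod_h h : fprod h h = \prod_(1 <= m < h.+1) (2 * m - 1).
Proof. by rewrite /fprod (big_geq (leqnn h)) muln1. Qed.

Lemma fprod_le h i : i <= h -> fprod h i <= fprod h h.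
Proof.
move=> hi; rewrite -(subKn hi).
elim: (h - i) (leq_subr i h) => [|n IH] hn; first by rewrite subn0.
apply: leq_trans (IH (ltnW hn)).
have -> : h - n = (h - n.+1).+1 by lia.
apply: fprod_mono; lia.
Qed.

Section Pair.
Variables (K H : nat).
Hypothesis hKH : K = H + H.
Hypothesis hH : 0 < H.

Local Notation pi := (@rot K H).

Lemma pi_low (x : 'I_K) : (pi x < H) = ~~ (x < H).
Proof.
have hx := ltn_ord x; rewrite rot_val; case: (ltnP x H) => h.
  rewrite modn_small; lia.
have -> : x + H = (x - H) + K by lia.
rewrite modnDr modn_small; lia.
Qed.

Lemma piK (x : 'I_K) : pi (pi x) = x.
Proof.
apply: val_inj; rewrite !rot_val modnDml -addnA -hKH -modnDmr modnn addn0 modn_small //.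
Qed.

Lemma pi_neq (x : 'I_K) : pi x != x.
Proof. by apply/eqP => h; have := pi_low x; rewrite h; case: (x < H). Qed.

Definition Uset (S : {set 'I_K}) := [set x in S | pi x \notin S].
Definition Sv (C : {set 'I_K}) := [set x | (x \notin C) && (pi x \in C)].

Lemma Sv_imset (C : {set 'I_K}) : Sv C = pi @: Uset C.
Proof.
apply/setP => x; rewrite inE; apply/idP/imsetP.
  case/andP => h1 h2; exists (pi x); last by rewrite piK.
  by rewrite inE h2 piK.
by case=> y; rewrite inE => /andP[h1 h2] ->; rewrite piK h1 h2.
Qed.

Lemma card_Sv (C : {set 'I_K}) : #|Sv C| = #|Uset C|.
Proof. rewrite Sv_imset card_imset //; exact: rot_inj. Qed.

Lemma U_odd (C : {set 'I_K}) : odd #|C| = odd #|Uset C|.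
Proof.
pose A := [set x | pi x \in C].
have hU : C :\: A = Uset C by apply/setP => x; rewrite !inE andbC.
set P := C :&: A.
pose L := [set x : 'I_K | x < H].
have hP : P :\: L = pi @: (P :&: L).
  apply/setP => x; rewrite !inE; apply/idP/imsetP.
    move/and3P=> [h1 h2 h3]; exists (pi x); last by rewrite piK.
    by rewrite /P !inE piK h3 h2 pi_low h1.
  case=> y; rewrite /P !inE => /andP[/andP[h1 h2] h3] ->.
  by rewrite pi_low h3 /= piK h1 h2.
have : #|P :&: L| + #|P :\: L| = #|P| by apply: cardsID.
rewrite hP card_imset; last exact: rot_inj.
rewrite -(cardsID A C) hU => <-.
by rewrite oddD addnn odd_double.
Qed.

Lemma U_rot a (S : {set 'I_K}) : Uset (rot a @: S) = rot a @: Uset S.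
Proof.
apply/setP => x; apply/idP/imsetP.
  rewrite inE => /andP[/imsetP[y hy ->]] h.
  exists y => //; rewrite inE hy /=; apply: contra h => h.
  by rewrite rotC; apply: imset_f.
case=> y; rewrite inE => /andP[hy h] ->.
rewrite inE imset_f //= rotC (mem_imset _ _ (@rot_inj K a)) h //.
Qed.

Lemma U_add1 (C : {set 'I_K}) k : k \notin C -> pi k \notin C -> Uset (k |: C) = k |: Uset C.
Proof.
move=> hk hpk; apply/setP => x; rewrite !inE.
case: (eqVneq x k) => [->|hxk] /=; first by rewrite (negbTE (pi_neq k)) hpk.
apply: andb_id2l => hx; congr negb; rewrite orb_idl // => /eqP h.
have hxe : x = pi k by rewrite -h piK.
by move: hx; rewrite hxe (negbTE hpk).
Qed.

Lemma U_add2 (C : {set 'I_K}) k : k \notin C -> pi k \in C -> Uset (k |: C) = Uset C :\ pi k.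
Proof.
move=> hk hpk; apply/setP => x; rewrite !inE.
case: (eqVneq x k) => [->|hxk] /=; first by rewrite hpk orbT (negbTE hk) andbF.
case: (eqVneq x (pi k)) => [->|hxpk] /=; first by rewrite piK eqxx /= andbF.
have -> : (pi x == k) = false.
  by apply/negbTE; apply: contra hxpk => /eqP <-; rewrite piK.
by [].
Qed.

End Pair.

Section RS2.
Local Open Scope ring_scope.

Lemma pair_ach N K H tb h (M : rat) :
  K = (H + H)%N -> tb = (h + h)%N -> (0 < h)%N -> (tb <= H)%N -> (0 < N)%N ->
  M = (K - tb)%:R * N%:R / K%:R ->
  exists F, achievable N K M F (N%:R / M - 1) /\
    (F <= 'C(K, tb) * \prod_(1 <= m < h.+1) (2 * m - 1))%N.
Proof.
move=> hKH htb hh htH hN hM.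
have hH : (0 < H)%N by lia.
pose wp := fun S : {set 'I_K} => if #|S| == tb then fprod h (#|Uset H S|./2) else 0%N.
pose ep := fun C : {set 'I_K} => Ee h (#|Uset H C|./2).+1.
pose W := (\sum_(S : {set 'I_K}) wp S)%N.
pose E := (\sum_(C : {set 'I_K}) ep C)%N.
have hw : forall S, (wp S <= W.+1)%N.
  move=> S; apply: leq_trans (leqnSn _); rewrite /W (bigD1 S) //=; exact: leq_addr.
have he : forall C, (ep C <= E)%N.
  move=> C; rewrite /E (bigD1 C) //=; exact: leq_addr.
have hwle : forall S : {set 'I_K}, #|S| = tb -> (wp S <= \prod_(1 <= m < h.+1) (2 * m - 1))%N.
  move=> S hS; rewrite /wp hS eqxx -fprod_h; apply: fprod_le.
  have : (#|Uset H S| <= h + h)%N.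
    rewrite -htb -hS; apply: subset_leq_card; apply/subsetP => x; by rewrite inE => /andP[].
  move=> h1; apply: leq_trans (half_leq h1) _; rewrite addnn half_double //.
exists (Fp tb W wp); split; last first.
  rewrite (Fp_sum tb hw).
  apply: (@leq_trans (\sum_(S : {set 'I_K} | #|S| == tb) \prod_(1 <= m < h.+1) (2 * m - 1))%N).
    by apply: leq_sum => S hS; exact: hwle (eqP hS).
  rewrite sum_nat_const; apply: leq_mul => //.
  have := card_draws 'I_K tb; rewrite card_ord => <-.
  by rewrite leq_eqVlt; apply/orP; left; apply/eqP; apply: eq_card => S; rewrite inE.
apply: (@frame_ach N K tb W E wp (Sv H) ep M) => //.
- by move=> C _; apply/subsetP => x; rewrite !inE => /andP[].
- move=> C k hC hk.
  have hkC : #|k |: C| = tb by rewrite cardsU1 hk hC /=; rewrite -?addnn; lia.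
  rewrite /wp hkC eqxx /ep.
  have hodd : odd #|Uset H C|.
    rewrite -(U_odd hKH hH) hC.
    have -> : tb.-1 = (h.-1).*2.+1 by rewrite -addnn; lia.
    by rewrite /= odd_double.
  have hjle : (#|Uset H C| <= tb.-1)%N.
    rewrite -hC; apply: subset_leq_card; apply/subsetP => x; by rewrite inE => /andP[].
  have hj := odd_double_half #|Uset H C|; rewrite hodd in hj.
  move: hj hjle; move: (#|Uset H C|./2) => i hj hjle.
  have hih : (i < h)%N by move: hjle; rewrite -hj -?addnn; lia.
  case hpk: (rot H k \in C).
  + have hpU : rot H k \in Uset H C by rewrite inE hpk piK // (negbTE hk).
    have hkS : k \in Sv H C by rewrite inE hk hpk.
    rewrite (U_add2 hKH hk hpk).
    have c1 : #|Uset H C :\ rot H k| = i.*2.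
      move: hj; rewrite (cardsD1 (rot H k) (Uset H C)) hpU /=.
      by move=> /eqP; rewrite eqn_add2l => /eqP ->.
    have c2 : #|Sv H C :\ k| = i.*2.
      have := card_Sv hKH C; rewrite (cardsD1 k (Sv H C)) hkS (cardsD1 (rot H k) (Uset H C)) hpU c1 /=.
      by move=> /eqP; rewrite eqn_add2l => /eqP ->.
    by rewrite c1 c2 half_double (fprod_Ee2 hih) mul2n.
  + rewrite (U_add1 hKH hH hk (negbT hpk)) cardsU1.
    have hkU : k \notin Uset H C by rewrite inE (negbTE hk).
    have hkS : k \notin Sv H C by rewrite inE hk hpk.
    have c2 : #|Sv H C :\ k| = (i.*2).+1.
      have := card_Sv hKH C; rewrite (cardsD1 k (Sv H C)) (negbTE hkS) -hj /=.
      by rewrite add0n => ->.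
    have c1 : ((k \notin Uset H C) + #|Uset H C|)%N = (i.+1).*2.
      by rewrite hkU -hj doubleS /= !add1n.
    rewrite c1 c2 half_double fprod_Ee1 //; congr (_ * _)%N.
    by rewrite mul2n doubleS subn1.
- lia.
- lia.
- apply: Gs_sym => a S; rewrite /wp (card_imset _ (@rot_inj K a)) U_rot.
  by rewrite (card_imset _ (@rot_inj K a)).
- rewrite (Fp_sum tb hw).
  have hS0 : #|[set x : 'I_K | (x < tb)%N]| = tb by apply: card_lt_set; lia.
  apply: (sum_w_pos hS0).
  have hU : Uset H [set x : 'I_K | (x < tb)%N] = [set x : 'I_K | (x < tb)%N].
    apply/setP => x; rewrite !inE; apply: andb_idr => hx.
    have := pi_low hKH hH x; have : (x < H)%N by lia.
    move=> -> /=; move: (_ %% _)%N => y /negbT; rewrite -!leqNgt => hy; lia.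
  rewrite /wp hS0 eqxx hU hS0 htb addnn half_double fprod_h big_nat_cond.
  by apply: prodn_cond_gt0 => m /andP[/andP[h1 _] _]; lia.
Qed.



End RS2.

Theorem theorem1 (N K : nat) (M : rat) (t : nat) :
  (1 <= N)%N -> (2 <= K)%N -> (0 < M)%R -> (M <= N%:R)%R ->
  (t%:R = K%:R * M / N%:R :> rat)%R -> (0 < t)%N ->
  (4 <= K)%N -> ~~ odd K ->
  ~~ odd (K - t) -> (2 <= K - t)%N -> (K - t <= K %/ 2)%N ->
  exists F : nat,
    achievable N K M F (N%:R / M - 1)%R /\
    (F <= F_JCM K t)%N /\
    (F%:R / (F_JCM K t)%:R <=
       Num.min ((\prod_(1 <= i < ((K - t) %/ 2).+1) (2 * i - 1))%:R / t%:R) 1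
       :> rat)%R.
Proof.
move=> hN hK2 hM0 hMN ht ht0 hK4 hKe htbe htb2 htbh.
set tb := (K - t)%N in htbe htb2 htbh *.
set h := (tb %/ 2)%N.
set Pr := (\prod_(1 <= i < h.+1) (2 * i - 1))%N.
set H := (K %/ 2)%N in htbh.
have hKH : K = (H + H)%N.
  by have := odd_double_half K; rewrite (negbTE hKe) add0n -divn2 addnn.
have htbh2 : tb = (h + h)%N.
  by have := odd_double_half tb; rewrite (negbTE htbe) add0n -divn2 addnn.
have htK : (t < K)%N by rewrite /tb in htb2; lia.
have htt : (K - tb)%N = t by rewrite /tb subKn // ltnW.
have hKpos : (0 < K)%N by lia.
have hK0 : (K%:R != 0 :> rat)%R by rewrite pnatr_eq0 -lt0n.
have hN0 : (N%:R != 0 :> rat)%R by rewrite pnatr_eq0 -lt0n.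
have ht0' : (t%:R != 0 :> rat)%R by rewrite pnatr_eq0 -lt0n.
have hM : (M = (K - tb)%:R * N%:R / K%:R)%R.
  rewrite htt ht; field; by rewrite hK0 hN0.
have hbin : 'C(K, tb) = 'C(K, t) by rewrite /tb bin_sub // ltnW.
have hC0 : (0 < 'C(K, t))%N by rewrite bin_gt0 ltnW.
have hFJ : (0 < F_JCM K t)%N by rewrite /F_JCM muln_gt0 ht0 hC0.
have hFJr : (0 < (F_JCM K t)%:R :> rat)%R by rewrite ltr0n.
case: (ltnP Pr t) => hPt.
- have [F [hach hF]] := @pair_ach N K H tb h M hKH htbh2 ltac:(lia) htbh ltac:(lia) hM.
  rewrite hbin -/Pr in hF.
  have hFle : (F <= F_JCM K t)%N.
    apply: leq_trans hF _; rewrite /F_JCM mulnC leq_mul2r; apply/orP; right; exact: ltnW.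
  exists F; split => //; split => //.
  rewrite le_min; apply/andP; split.
    rewrite ler_pdivrMr // /F_JCM natrM mulrA divfK // -natrM ler_nat mulnC //.
  by rewrite ler_pdivrMr // mul1r ler_nat.
- exists (F_JCM K t); split.
    have := @jcm_ach N K tb M ltac:(lia) ltac:(lia) ltac:(lia) hM.
    by rewrite htt hbin.
  split => //.
  rewrite divff ?gt_eqF // le_min lexx andbT.
  by rewrite ler_pdivlMr ?ltr0n // mul1r ler_nat.
Qed.
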